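(* Let $\langle Y,\tau\rangle$ be a Hausdorff space with a Sorgenfrey base. Then there exists a continuous open surjection $f:\langle{}^\omega\omega,\sigma_{\mathbb S}\rangle\to\langle Y,\tau\rangle$. Moreover, if $\langle Y,\tau\rangle$ has a Sorgenfrey base that is locally strict and has strict branches, then $\langle Y,\tau\rangle$ is homeomorphic to $\langle{}^\omega\omega,\sigma_{\mathbb S}\rangle$.
   Context: Notation: ${}^{<\omega}\omega$, ${}^\omega\omega$ finite/infinite sequences of naturals; $a^\frown k$ extends $a$ by $k$; $a\triangleleft b$ iff there is $n$ in both domains with $a\upharpoonright n=b\upharpoonright n$ and $a(n)<b(n)$. $\sigma_{\mathbb S}$ is the topology on ${}^\omega\omega$ with base $\{B(p,m):p\in{}^\omega\omega,m\in\omega\}$, $B(p,m)=\{p\}\cup\{r: r\upharpoonright m=p\upharpoonright m,\ p\triangleleft r\}$. A Souslin scheme on $X$ is a family $\mathbf V=\langle V_a\rangle_{a\in{}^{<\omega}\omega}$ of subsets of $X$; $\mathrm{fruit}(\mathbf V,p)=\bigcap_nV_{p\upharpoonright n}$; covering: $V_{\langle\rangle}=X$ and $V_a=\bigcup_nV_{a^\frown n}$; complete: all fruits nonempty; open: all $V_a$ open; has strict branches: every fruit is a singleton; locally strict: $V_a=\bigcup_nV_{a^\frown n}$ and $V_{a^\frown m}\cap V_{a^\frown k}=\emptyset$ for all $a$ and $m\ne k$. $\mathrm{branches}(\mathbf V,x)=\{q: x\in\mathrm{fruit}(\mathbf V,q)\}$; $\mathrm{rsequences}(q,n)=\{p:q\triangleleft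 p,\ q\upharpoonright n=p\upharpoonright n\}$; $\mathrm{cut}(\mathbf V,q,n)=\bigcup\{\mathrm{fruit}(\mathbf V,p):p\in\mathrm{rsequences}(q,n)\}$. A branch $q$ of $x$ is a $\tau$-base branch of $x$ if $\{\mathrm{cut}(\mathbf V,q,m)\cup\{x\}:m\in\omega\}$ is an open neighborhood base at $x$; $\mathrm{BB}(\mathbf V,x,\tau)$ is the set of these. A Sorgenfrey base for a Hausdorff $\langle X,\tau\rangle$ is an open complete covering Souslin scheme with (S1) for all $x$, $q\in\mathrm{branches}(\mathbf V,x)$, $n$, some $t\in\mathrm{BB}(\mathbf V,x,\tau)$ has $t\upharpoonright n=q\upharpoonright n$; (S2) every $q\in{}^\omega\omega$ lies in $\mathrm{BB}(\mathbf V,z,\tau)$ for some $z$. *)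

(* Defs.v *)
From HB Require Import structures.
From mathcomp Require Import all_boot all_order.
From mathcomp Require Import all_classical all_reals all_analysis.
Set Implicit Arguments. Unset Strict Implicit. Unset Printing Implicit Defensive.
Local Open Scope classical_set_scope.

(* ${}^\omega\omega$ = nat -> nat ; ${}^{<\omega}\omega$ = seq nat *)

Definition restr (p : nat -> nat) (n : nat) : seq nat := mkseq p n.

Definition tri (a b : nat -> nat) : Prop :=
  exists n, (forall i, (i < n)%N -> a i = b i) /\ (a n < b n)%N.

Definition Bset (p : nat -> nat) (m : nat) : set (nat -> nat) :=
  [set p] `|` [set r | (forall i, (i < m)%N -> r i = p i) /\ tri p r].

Definition baireS : Type := nat -> nat.
HB.instance Definition _ := Choice.on baireS.
HB.instance Definition _ := isPointed.Build ((nat -> nat) * nat)%type (fun _ => 0%N, 0%N).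
HB.instance Definition _ := @isSubBaseTopological.Build baireS
  ((nat -> nat) * nat)%type setT (fun pm => Bset pm.1 pm.2).

Section Souslin.
Context {X : topologicalType}.
Implicit Types (V : seq nat -> set X) (p q : nat -> nat) (x : X).

Definition fruit V p : set X := \bigcap_n V (restr p n).

Definition covering V : Prop :=
  V [::] = setT /\ forall a, V a = \bigcup_n V (rcons a n).

Definition complete V : Prop := forall p, fruit V p !=set0.

Definition open_scheme V : Prop := forall a, open (V a).

Definition strict_branches V : Prop := forall p, exists x, fruit V p = [set x].

Definition locally_strict V : Prop :=
  forall a, V a = \bigcup_n V (rcons a n) /\
    forall m k, m <> k -> V (rcons a m) `&` V (rcons a k) = set0.

Definition branches V x : set (nat -> nat) := [set q | fruit V q x].

Definition rsequences q n : set (nat -> nat) :=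
  [set p | tri q p /\ forall i, (i < n)%N -> q i = p i].

Definition cut V q n : set X := \bigcup_(p in rsequences q n) fruit V p.

(* q is a tau-base branch of x *)
Definition BB V x : set (nat -> nat) :=
  [set q | branches V x q /\
    (forall m, open (cut V q m `|` [set x])) /\
    (forall U, nbhs x U -> exists m, cut V q m `|` [set x] `<=` U)].

Definition sorgenfrey_base V : Prop :=
  open_scheme V /\ complete V /\ covering V /\
  (forall x q n, branches V x q ->
     exists t, BB V x t /\ forall i, (i < n)%N -> t i = q i) /\
  (forall q, exists z, BB V z q).
End Souslin.

Definition open_map {S T : topologicalType} (f : S -> T) : Prop :=
  forall A : set S, open A -> open (f @` A).

Definition homeomorphic (S T : topologicalType) : Prop :=
  exists (f : S -> T) (g : T -> S),
    cancel f g /\ cancel g f /\ continuous f /\ continuous g.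

(* Main.v *)
Require Import Defs.
From HB Require Import structures.
From mathcomp Require Import all_boot all_order.
From mathcomp Require Import all_classical all_reals all_analysis.
Set Implicit Arguments. Unset Strict Implicit.
Local Open Scope classical_set_scope.

Lemma openB (A : set baireS) : open A <->
  exists2 D : set (set baireS), D `<=` finI_from setT (fun pm : (nat->nat)*nat => Bset pm.1 pm.2)
   & \bigcup_(i in D) i = A.
Proof. by []. Qed.

Lemma Bset_open q M : open (Bset q M : set baireS).
Proof.
apply/openB; exists [set Bset q M]; last by rewrite bigcup_set1.
by move=> _ ->; exact: (@finI_from1 _ _ _ (fun pm : (nat->nat)*nat => Bset pm.1 pm.2) (q, M)).
Qed.

Lemma Bset_self q M : Bset q M q.
Proof. by left. Qed.

Lemma Bset_mono q M M' : (M <= M')%N -> Bset q M' `<=` Bset q M.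
Proof.
move=> le r [->|[h1 h2]]; first by left.
right; split=> // i iM; apply: h1; exact: leq_trans iM le.
Qed.

Lemma Bset_in p m q : Bset p m q -> exists M, Bset q M `<=` Bset p m.
Proof.
case=> [->|[h1 [n [hn lt]]]]; first by exists m.
exists n.+1 => r [->|[g1 [k [hk ltk]]]]; first by right; split => //; exists n.
have nm : (m <= n)%N.
  rewrite leqNgt; apply/negP => nm; move: (h1 n nm) => e; by rewrite e ltnn in lt.
right; split.
  move=> i im; rewrite g1 ?h1 //; exact: leq_trans im (leq_trans nm (leqnSn n)).
exists n; split; first by move=> i iM; rewrite g1 ?hn // ltnS ltnW.
by rewrite g1.
Qed.

Lemma nbhs_Bset q M : nbhs (q : baireS) (Bset q M).
Proof. apply: open_nbhs_nbhs; split; [exact: Bset_open|exact: Bset_self]. Qed.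

Lemma Bset_seq (s : seq ((nat -> nat) * nat)) q :
  (forall j, j \in s -> Bset j.1 j.2 q) ->
  exists M, forall j, j \in s -> Bset q M `<=` Bset j.1 j.2.
Proof.
elim: s => [|j s IH] H; first by exists 0%N.
have [M1 HM1] := Bset_in (H j (mem_head _ _)).
have [M2 HM2] : exists M, forall j, j \in s -> Bset q M `<=` Bset j.1 j.2.
  by apply: IH => j' js; apply: H; rewrite in_cons js orbT.
exists (maxn M1 M2) => j'; rewrite in_cons => /orP[/eqP->|js].
  apply: subset_trans HM1; apply: Bset_mono; exact: leq_maxl.
apply: subset_trans (HM2 _ js); apply: Bset_mono; exact: leq_maxr.
Qed.

Lemma open_Bset (A : set baireS) q : open A -> A q -> exists M, Bset q M `<=` A.
Proof.
move/openB=> [D sD <-] [i Di iq].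
have [F _ FE] := sD _ Di.
have [M HM] : exists M, forall j, j \in finmap.enum_fset F -> Bset q M `<=` Bset j.1 j.2.
  apply: Bset_seq => j jF; rewrite -FE in iq; exact: iq.
exists M => r Mr; exists i => //; rewrite -FE => j jF; exact: HM.
Qed.

Section Main.
Variables (Y : topologicalType) (hY : hausdorff_space Y) (V : seq nat -> set Y).
Hypothesis SB : sorgenfrey_base V.

Lemma rseq_mono q m M : (m <= M)%N -> rsequences q M `<=` rsequences q m.
Proof. by move=> le p [h1 h2]; split => // i im; apply: h2; exact: leq_trans im le. Qed.

Lemma cut_mono q m M : (m <= M)%N -> Defs.cut V q M `<=` Defs.cut V q m.
Proof. by move=> le x [p pM fp]; exists p => //; exact: rseq_mono pM. Qed.

Definition bump q M : nat -> nat := fun i => if i == M then (q M).+1 else q i.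

Lemma bump_rseq q M : rsequences q M (bump q M).
Proof.
split; last by move=> i iM; rewrite /bump (ltn_eqF iM).
exists M; split; last by rewrite /bump eqxx.
by move=> i iM; rewrite /bump (ltn_eqF iM).
Qed.

Lemma cut_nonempty q M : Defs.cut V q M !=set0.
Proof.
case: SB => _ [cp _]; have [x fx] := cp (bump q M).
by exists x; exists (bump q M) => //; exact: bump_rseq.
Qed.

Lemma BB_uniq z z' q : BB V z q -> BB V z' q -> z = z'.
Proof.
move=> [_ [_ Bz]] [_ [_ Bz']]; apply: hY => A B nA nB.
have [m hm] := Bz _ nA; have [m' hm'] := Bz' _ nB.
have [x cx] := cut_nonempty q (maxn m m').
exists x; split.
  by apply: hm; left; apply: (cut_mono (leq_maxl m m')).
by apply: hm'; left; apply: (cut_mono (leq_maxr m m')).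
Qed.

Lemma BB_branch z q : BB V z q -> fruit V q z.
Proof. by case. Qed.

Lemma exists_branch y : exists q, fruit V q y.
Proof.
case: SB => _ [_ [[VT Vcov] _]].
have step : forall a, exists k, V a y -> V (rcons a k) y.
  move=> a; have [Vay|nV] := pselect (V a y).
    by move: Vay; rewrite Vcov => -[k _ h]; exists k.
  by exists 0%N.
have [g hg] := choice step.
pose s := fix s n := if n is n'.+1 then rcons (s n') (g (s n')) else [::].
have Vs : forall n, V (s n) y by elim=> [|n IH] /=; [rewrite VT|apply: hg].
have sE : forall n, s n = restr (fun i => g (s i)) n.
  elim=> [//|n IH]; by rewrite /restr mkseqS -/(restr _ n) -IH.
by exists (fun i => g (s i)) => n _; rewrite -sE.
Qed.

Lemma exists_f : exists f : baireS -> Y, forall q, BB V (f q) q.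
Proof. case: SB => _ [_ [_ [_ S2]]]; case: (choice S2) => f hf; by exists f. Qed.

Lemma f_props (f : baireS -> Y) : (forall q, BB V (f q) q) ->
  continuous f /\ open_map f /\ (forall y : Y, exists p : baireS, f p = y).
Proof.
move=> hf; case: SB => Vop [cp [cov [S1 S2]]].
split; [|split].
- apply/continuousP => U oU; rewrite openE => q /= Ufq.
  have [_ [_ hB]] := hf q.
  have nU : nbhs (f q) U by rewrite openE in oU; exact: oU.
  have [m hm] := hB _ nU.
  apply: filterS (nbhs_Bset q m) => r [->|[h1 h2]]; first by apply: hm; right.
  apply: hm; left; exists r; last exact: BB_branch.
  by split => // i im; rewrite h1.
- move=> A oA; rewrite openE => _ [q Aq <-].
  have [M hM] := open_Bset oA Aq.
  have [_ [oc _]] := hf q.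
  apply: (@filterS _ _ _ (Defs.cut V q M `|` [set f q])); last first.
    by apply: open_nbhs_nbhs; split; [exact: oc|right].
  move=> x [[p [[n [hn lt]] pM] fx]|->]; last by exists q.
  have Mn : (M <= n)%N.
    rewrite leqNgt; apply/negP => nM; by rewrite (pM n nM) ltnn in lt.
  have [t [Bt ht]] := S1 x p n.+1 fx.
  exists t; last by apply: BB_uniq (hf t) Bt.
  apply: hM; right; split.
    by move=> i iM; rewrite ht ?pM // ltnS; exact: leq_trans (ltnW iM) Mn.
  exists n; split; last by rewrite ht.
  by move=> i iM; rewrite ht ?hn // ltnS ltnW.
- move=> y; have [q fq] := exists_branch y.
  have [t [Bt _]] := S1 y q 0%N fq.
  by exists t; apply: BB_uniq (hf t) Bt.
Qed.

Lemma branch_uniq y q q' : locally_strict V -> fruit V q y -> fruit V q' y -> q = q'.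
Proof.
move=> LS fq fq'.
have E : forall n, restr q n = restr q' n /\ (forall i, (i < n)%N -> q i = q' i).
  elim=> [|n [IH IHi]]; first by split.
  have eqn : q n = q' n.
    apply/eqP/negPn/negP => /eqP ne.
    have D := (LS (restr q n)).2 _ _ ne.
    have y1 : V (rcons (restr q n) (q n)) y by rewrite /restr -mkseqS; exact: (fq n.+1 I).
    have y2 : V (rcons (restr q n) (q' n)) y by rewrite IH /restr -mkseqS; exact: (fq' n.+1 I).
    by have : (V (rcons (restr q n) (q n)) `&` V (rcons (restr q n) (q' n))) y by [];
       rewrite D.
  split; first by rewrite /restr !mkseqS -!/(restr _ n) IH eqn.
  by move=> i; rewrite ltnS leq_eqVlt => /orP[/eqP->//|]; apply: IHi.
apply: funext => i; apply: (E i.+1).2; exact: ltnSn.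
Qed.

End Main.
Unset Implicit Arguments.

Theorem mainTheorem8 (Y : topologicalType) (hY : hausdorff_space Y) :
  ((exists V : seq nat -> set Y, sorgenfrey_base V) ->
     exists f : baireS -> Y,
       continuous f /\ open_map f /\ (forall y : Y, exists p : baireS, f p = y)) /\
  ((exists V : seq nat -> set Y,
      sorgenfrey_base V /\ locally_strict V /\ strict_branches V) ->
     homeomorphic baireS Y).
Proof.
split.
  move=> [V SB]; have [f hf] := exists_f SB; exists f; exact: (f_props hY SB hf).
move=> [V [SB [LS _]]]; have [f hf] := exists_f SB.
have [fc [fo fs]] := f_props hY SB hf.
case: (choice fs) => g hg.
have finj : forall p q, f p = f q -> p = q.
  move=> p q e; apply: (branch_uniq (y := f q) LS); last exact: BB_branch (hf q).
  rewrite -e; exact: BB_branch (hf p).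
exists f, g; split; first by move=> p; apply: finj; rewrite hg.
split; first exact: hg.
split => //.
apply/continuousP => A oA.
have -> : g @^-1` A = f @` A.
  apply/seteqP; split=> [y Ay|_ [p Ap <-]]; first by exists (g y); rewrite ?hg.
  by rewrite /= (finj (g (f p)) p) ?hg.
exact: fo.
Qed.
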